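(* Let $\mathfrak R=(\mathcal B,\mathcal S,\pi)$ be a return risk measurement regime and assume that each of the sets $\mathcal C$, $\mathcal B$, $\mathcal S$ is logconvex, i.e. for $\mathcal D\in\{\mathcal C,\mathcal B,\mathcal S\}$: $X,Y\in\mathcal D$ and $\alpha\in(0,1)$ imply $X^\alpha Y^{1-\alpha}\in\mathcal D$. (i) If $\pi$ is quasi-logconvex, i.e. $\pi(X^\alpha Y^{1-\alpha})\le\max\{\pi(X),\pi(Y)\}$ for all $X,Y\in\mathcal S$, $\alpha\in(0,1)$, then $\eta_{\mathfrak R}$ is quasi-logconvex: $\eta_{\mathfrak R}(X^\alpha Y^{1-\alpha})\le\max\{\eta_{\mathfrak R}(X),\eta_{\mathfrak R}(Y)\}$ for all $X,Y\in\mathcal C$, $\alpha\in(0,1)$. (ii) If $\pi$ is logconvex, i.e. $\pi(X^\alpha Y^{1-\alpha})\le\pi(X)^\alpha\pi(Y)^{1-\alpha}$ for all $X,Y\in\mathcal S$, $\alpha\in(0,1)$, then $\eta_{\mathfrak R}$ is logconvex: $\eta_{\mathfrak R}(X^\alpha Y^{1-\alpha})\le\eta_{\mathfrak R}(X)^\alpha\eta_{\mathfrak R}(Y)^{1-\alpha}$ for all $X,Y\in\mathcal C$, $\alpha\in(0,1)$.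
   Context: Let $(\Omega,\mathcal F,P)$ be a probability space, $L^0$ the space of real random variables with the a.s. order, $L^0_{++}=\{X\in L^0:X>0\text{ a.s.}\}$, and $\frac{\mathcal A}{\mathcal D}=\{AD^{-1}:A\in\mathcal A,D\in\mathcal D\}$. Setting: nonempty sets $\mathcal C,\mathcal S,\mathcal K\subset L^0_{++}$ (model set, security set, set of relative losses) with $\frac{\mathcal C}{\mathcal S}\subset\mathcal K$; a pricing map $\pi\colon\mathcal S\to(0,\infty)$; a relative acceptance set $\mathcal B$, i.e. a nonempty proper subset of $\mathcal K$ such that $X\in\mathcal B$, $Y\in\mathcal K$, $Y\le X$ imply $Y\in\mathcal B$. $\mathfrak R=(\mathcal B,\mathcal S,\pi)$ is a return risk measurement regime, and $\eta_{\mathfrak R}(X)=\inf\{\pi(Z):Z\in\mathcal S,\ X/Z\in\mathcal B\}\in[0,\infty]$, $X\in\mathcal C$ ($\inf\emptyset=\infty$), is the MARRM. Conventions in $[0,\infty]$: $\infty^\alpha=\infty$ for $\alpha>0$, $0\cdot\infty$ is interpreted so that products involving $\infty$ with a positive factor are $\infty$. *)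

(* Defs.v *)
From HB Require Import structures.
From mathcomp Require Import all_boot all_order all_algebra.
From mathcomp Require Import all_classical all_reals all_analysis.
Set Implicit Arguments. Unset Strict Implicit. Unset Printing Implicit Defensive.
Import Order.TTheory GRing.Theory Num.Theory.
Local Open Scope classical_set_scope.
Local Open Scope ring_scope.

Section MARRM.
Context {R : realType} {d : measure_display} {T : measurableType d}.
Variable P : probability T R.

(* Random variables are represented by measurable functions T -> R; elements
   of L^0 are their P-a.s. equivalence classes, which we encode by requiring
   all sets/maps below to be invariant under P-a.s. equality. *)
Definition L0 : set (T -> R) := [set X | measurable_fun setT X].
Definition ae_eqRV (X Y : T -> R) : Prop := {ae P, forall w, X w = Y w}.
Definition ae_leRV (X Y : T -> R) : Prop := {ae P, forall w, X w <= Y w}.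
Definition L0pp : set (T -> R) := [set X | L0 X /\ {ae P, forall w, 0 < X w}].

Definition L0pp_class (A : set (T -> R)) : Prop :=
  A `<=` L0pp /\ (forall X Y, A X -> L0 Y -> ae_eqRV X Y -> A Y).

Definition rv_div (X Z : T -> R) : T -> R := fun w => X w / Z w.
Definition rv_gmean (a : R) (X Y : T -> R) : T -> R :=
  fun w => powR (X w) a * powR (Y w) (1 - a).

Definition logconvex (A : set (T -> R)) : Prop :=
  forall X Y a, A X -> A Y -> 0 < a < 1 -> A (rv_gmean a X Y).

Definition rrm_regime (C S K B : set (T -> R)) (pi : (T -> R) -> R) : Prop :=
  [/\ (L0pp_class C /\ C !=set0) /\ (L0pp_class S /\ S !=set0),
      L0pp_class K /\ K !=set0,
      (forall X Z, C X -> S Z -> K (rv_div X Z)),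
      (forall Z, S Z -> 0 < pi Z) /\
        (forall Z Z', S Z -> S Z' -> ae_eqRV Z Z' -> pi Z = pi Z') &
      [/\ L0pp_class B, B !=set0, B `<=` K, B <> K &
          (forall X Y, B X -> K Y -> ae_leRV Y X -> B Y)]].

Definition marrm (S B : set (T -> R)) (pi : (T -> R) -> R) (X : T -> R)
  : \bar R :=
  ereal_inf [set (pi Z)%:E | Z in [set Z | S Z /\ B (rv_div X Z)]].

End MARRM.

Definition epow {R : realType} (x : \bar R) (a : R) : \bar R :=
  if x is +oo%E then +oo%E else (powR (fine x) a)%:E.

Definition emul_oo {R : realType} (x y : \bar R) : \bar R :=
  if (x == +oo%E) || (y == +oo%E) then +oo%E else (fine x * fine y)%:E.

(* Main.v *)
Require Import Defs.
From HB Require Import structures.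
From mathcomp Require Import all_boot all_order all_algebra.
From mathcomp Require Import all_classical all_reals all_analysis.
From mathcomp Require Import ring lra.
Import Order.TTheory GRing.Theory Num.Theory.
Local Open Scope classical_set_scope.
Local Open Scope ring_scope.

Lemma powRV (R : realType) (z a : R) : 0 < z -> powR (z^-1) a = (powR z a)^-1.
Proof.
move=> z0; rewrite -powR_inv1 ?ltW // -powRrM mulN1r powRN //.
Qed.

Lemma gm_div (R : realType) (x y z w a : R) : 0 < x -> 0 < y -> 0 < z -> 0 < w ->
  (powR x a * powR y (1 - a)) / (powR z a * powR w (1 - a)) =
  powR (x / z) a * powR (y / w) (1 - a).
Proof.
move=> x0 y0 z0 w0.
rewrite !powRM ?invr_ge0 ?ltW // !powRV // invfM; ring.
Qed.

Lemma feas (R : realType) (d : measure_display) (T : measurableType d)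
  (P : probability T R) (C S K B : set (T -> R)) (pi : (T -> R) -> R) X Y Z W a :
  rrm_regime P C S K B pi ->
  logconvex C -> logconvex B -> logconvex S -> 0 < a < 1 ->
  C X -> C Y -> S Z /\ B (rv_div X Z) -> S W /\ B (rv_div Y W) ->
  S (rv_gmean a Z W) /\ B (rv_div (rv_gmean a X Y) (rv_gmean a Z W)).
Proof.
move=> [[[Cc _] [Sc _]] [Kc _] CSK _ [Bc _ _ _ _]] lC lB lS a01 CX CY [SZ BZ] [SW BW].
split; first exact: lS.
apply: (Bc.2 (rv_gmean a (rv_div X Z) (rv_div Y W))); first exact: lB.
  exact: (Kc.1 _ (CSK _ _ (lC _ _ _ CX CY a01) (lS _ _ _ SZ SW a01))).1.
have hX := (Cc.1 _ CX).2; have hY := (Cc.1 _ CY).2.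
have hZ := (Sc.1 _ SZ).2; have hW := (Sc.1 _ SW).2.
rewrite /ae_eqRV; near=> w.
have x0 : 0 < X w by near: w.
have y0 : 0 < Y w by near: w.
have z0 : 0 < Z w by near: w.
have w0 : 0 < W w by near: w.
by rewrite /rv_div /rv_gmean gm_div.
Unshelve. all: by end_near.
Qed.

Lemma powR_sum1 (R : realType) (t a : R) : 0 < t -> powR t a * powR t (1 - a) = t.
Proof.
move=> t0; rewrite -powRD; first by rewrite addrC subrK powRr1 // ltW.
by apply/implyP => _; rewrite gt_eqF.
Qed.

Lemma zero_case (R : realType) (y a e : R) : 0 <= y -> 0 < a < 1 -> 0 < e ->
  exists x' y', 0 < x' /\ y < y' /\ powR x' a * powR y' (1 - a) <= e.
Proof.
move=> y0 /andP[a0 a1] e0.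
have c0 : 0 < e / powR (y + 1) (1 - a).
  by apply: divr_gt0 => //; apply: powR_gt0; lra.
exists (powR (e / powR (y + 1) (1 - a)) a^-1), (y + 1); split; first exact: powR_gt0.
split; first lra.
rewrite -powRrM mulVf ?gt_eqF // powRr1 ?divfK // ?gt_eqF ?powR_gt0 //; try lra; exact: ltW.
Qed.

Lemma approx_gmean (R : realType) (x y a e : R) : 0 <= x -> 0 <= y -> 0 < a < 1 -> 0 < e ->
  exists x' y', x < x' /\ y < y' /\
    powR x' a * powR y' (1 - a) <= powR x a * powR y (1 - a) + e.
Proof.
move=> x0 y0 a01 e0; have /andP[a0 a1] := a01.
have [xz|xp] := eqVneq x 0.
  have [x' [y' [? [? h]]]] := @zero_case _ y a e y0 a01 e0.
  exists x', y'; rewrite xz powR0 ?gt_eqF // mul0r add0r; split => //; lra.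
have [yz|yp] := eqVneq y 0.
  have a01' : 0 < 1 - a < 1 by apply/andP; split; lra.
  have [y' [x' [? [? h]]]] := @zero_case _ x (1 - a) e x0 a01' e0.
  exists x', y'; rewrite yz powR0 ?mulr0 ?add0r; last by apply/eqP; lra.
  split; first lra. split => //.
  by rewrite mulrC; move: h; rewrite opprB addrCA subrr addr0.
have xg : 0 < x by rewrite lt_neqAle eq_sym xp.
have yg : 0 < y by rewrite lt_neqAle eq_sym yp.
set G := powR x a * powR y (1 - a).
have G0 : 0 < G by rewrite mulr_gt0 // powR_gt0.
set t := 1 + e / G.
have t1 : 1 < t by rewrite /t ltrDl divr_gt0.
exists (t * x), (t * y); split; first by rewrite ltr_pMl.
split; first by rewrite ltr_pMl.
have tg : 0 < t by lra.
rewrite !powRM; try exact: ltW.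
rewrite mulrACA powR_sum1 //.
by rewrite /t mulrDl mul1r -mulrA mulVf ?mulr1 // gt_eqF.
Qed.

Section E.
Variables (R : realType) (A : Type) (f : A -> R).

Definition iE (F : set A) : \bar R := ereal_inf [set (f z)%:E | z in F].

Lemma iE_fin F : (forall z, F z -> 0 < f z) -> iE F != +oo%E ->
  exists2 x, iE F = x%:E & 0 <= x.
Proof.
move=> fp ne.
have ge0 : (0 <= iE F)%E.
  by apply: le_ereal_inf_tmp => _ [z Fz <-]; rewrite lee_fin ltW // fp.
move: ne ge0; case: (iE F) => [x| |] //= _.
by rewrite lee_fin => x0; exists x.
Qed.

Lemma iE_lt F x : (iE F < x%:E)%E -> exists2 z, F z & f z < x.
Proof. by move/ereal_inf_lt => [_ [z Fz <-]]; rewrite lte_fin => h; exists z. Qed.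

End E.

Section F.
Variables (R : realType) (A : Type) (f : A -> R).
Local Notation iE := (@iE R A f).

Lemma part_i F1 F2 (m : \bar R) : (forall z, F1 z -> 0 < f z) -> (forall z, F2 z -> 0 < f z) ->
  (forall z w, F1 z -> F2 w -> (m <= maxe (f z)%:E (f w)%:E)%E) ->
  (m <= maxe (iE F1) (iE F2))%E.
Proof.
move=> p1 p2 H.
have [h1|h1] := eqVneq (iE F1) +oo%E.
  by rewrite h1 maxye leey.
have [h2|h2] := eqVneq (iE F2) +oo%E.
  by rewrite h2 maxey leey.
have [x e1 x0] := @iE_fin R A f F1 p1 h1.
have [y e2 y0] := @iE_fin R A f F2 p2 h2.
rewrite e1 e2 -EFin_max; apply/lee_addgt0Pr => e e0.
have [z Fz fz] : exists2 z, F1 z & f z < x + e.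
  by apply: (@iE_lt R A f); rewrite e1 lte_fin ltrDl.
have [w Fw fw] : exists2 w, F2 w & f w < y + e.
  by apply: (@iE_lt R A f); rewrite e2 lte_fin ltrDl.
apply: le_trans (H z w Fz Fw) _.
rewrite -EFin_max -EFinD lee_fin ge_max; apply/andP; split.
  by apply: le_trans (ltW fz) _; rewrite lerD2r le_max lexx.
by apply: le_trans (ltW fw) _; rewrite lerD2r le_max lexx orbT.
Qed.

Lemma part_ii F1 F2 (m : \bar R) a : 0 < a < 1 ->
  (forall z, F1 z -> 0 < f z) -> (forall z, F2 z -> 0 < f z) ->
  (forall z w, F1 z -> F2 w -> (m <= (powR (f z) a * powR (f w) (1 - a))%:E)%E) ->
  (m <= emul_oo (epow (iE F1) a) (epow (iE F2) (1 - a)))%E.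
Proof.
move=> a01 p1 p2 H.
have [h1|h1] := eqVneq (iE F1) +oo%E.
  by rewrite h1 /emul_oo /= leey.
have [h2|h2] := eqVneq (iE F2) +oo%E.
  by rewrite h2 /emul_oo /= orbT leey.
have [x e1 x0] := @iE_fin R A f F1 p1 h1.
have [y e2 y0] := @iE_fin R A f F2 p2 h2.
rewrite e1 e2 /emul_oo /=; apply/lee_addgt0Pr => e e0.
have [x' [y' [xx [yy hl]]]] := @approx_gmean R x y a e x0 y0 a01 e0.
have [z Fz fz] : exists2 z, F1 z & f z < x'.
  by apply: (@iE_lt R A f); rewrite e1 lte_fin.
have [w Fw fw] : exists2 w, F2 w & f w < y'.
  by apply: (@iE_lt R A f); rewrite e2 lte_fin.
apply: le_trans (H z w Fz Fw) _.
rewrite -EFinD lee_fin; apply: le_trans hl.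
have /andP[a0 a1] := a01.
apply: ler_pM; rewrite ?powR_ge0 //; apply: ge0_ler_powR; rewrite ?nnegrE; try lra.
- by apply/ltW/p1.
- by apply/ltW/p2.
Qed.
End F.

Theorem mainTheorem5 (R : realType) (d : measure_display) (T : measurableType d)
  (P : probability T R) (C S K B : set (T -> R)) (pi : (T -> R) -> R) :
  rrm_regime P C S K B pi ->
  logconvex C -> logconvex B -> logconvex S ->
  ((forall X Y a, S X -> S Y -> 0 < a < 1 ->
      pi (rv_gmean a X Y) <= Num.max (pi X) (pi Y)) ->
   forall X Y a, C X -> C Y -> 0 < a < 1 ->
      (marrm S B pi (rv_gmean a X Y) <= maxe (marrm S B pi X) (marrm S B pi Y))%E)
  /\
  ((forall X Y a, S X -> S Y -> 0 < a < 1 ->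
      pi (rv_gmean a X Y) <= powR (pi X) a * powR (pi Y) (1 - a)) ->
   forall X Y a, C X -> C Y -> 0 < a < 1 ->
      (marrm S B pi (rv_gmean a X Y)
        <= emul_oo (epow (marrm S B pi X) a) (epow (marrm S B pi Y) (1 - a)))%E).
Proof.
move=> reg lC lB lS; have reg' := reg.
case: reg' => [[[Cc _] [Sc _]] _ _ [pip _] _].
split => H X Y a CX CY a01.
- apply: (@part_i R (T -> R) pi); try (by move=> z [Sz _]; apply: pip).
  move=> Z W FZ FW.
  have [SG BG] := @feas R d T P C S K B pi X Y Z W a reg lC lB lS a01 CX CY FZ FW.
  apply: le_trans (_ : ((pi (rv_gmean a Z W))%:E <= _)%E).
    by apply: ereal_inf_lbound; exists (rv_gmean a Z W).
  by rewrite -EFin_max lee_fin; apply: H => //; [case: FZ | case: FW].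
- apply: (@part_ii R (T -> R) pi) => //; try (by move=> z [Sz _]; apply: pip).
  move=> Z W FZ FW.
  have [SG BG] := @feas R d T P C S K B pi X Y Z W a reg lC lB lS a01 CX CY FZ FW.
  apply: le_trans (_ : ((pi (rv_gmean a Z W))%:E <= _)%E).
    by apply: ereal_inf_lbound; exists (rv_gmean a Z W).
  by rewrite lee_fin; apply: H => //; [case: FZ | case: FW].
Qed.
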